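(* For all $u,v\in\mathfrak{A}^0_{\mathrm{G}}$, we have $u\sqcup\!\sqcup v\in\mathfrak{A}^0_{\mathrm{G}}$.
   Context: $\mathbb{Q}\langle\pi,y\rangle$ is the free noncommutative $\mathbb{Q}$-algebra on $\pi,y$ with unit $\mathbf{1}$, and $\rho=\pi-\mathbf{1}$. For integers $0\le t\le s$ set $z_{t,s}=\rho^t\pi^{s-t}y$. $\mathfrak{A}^0_{\mathrm{G}}$ is the $\mathbb{Q}$-span in $\mathbb{Q}\langle\pi,y\rangle$ of all products $z_{t_1,s_1}z_{t_2,s_2}\cdots z_{t_d,s_d}$ ($d\ge1$) with $1\le t_1\le s_1$ and $0\le t_j\le s_j$ for $j\ge2$. The shuffle $\sqcup\!\sqcup$ is the bilinear product on $\mathbb{Q}\langle\pi,y\rangle$ with $\mathbf{1}\sqcup\!\sqcup u=u\sqcup\!\sqcup\mathbf{1}=u$, $(yu)\sqcup\!\sqcup v=u\sqcup\!\sqcup(yv)=y(u\sqcup\!\sqcup v)$, $\pi u\sqcup\!\sqcup\pi v=\pi(u\sqcup\!\sqcup\pi v)+\pi(\pi u\sqcup\!\sqcup v)-\pi(u\sqcup\!\sqcup v)$ for words $u,v$. *)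

(* Defs.v *)
From HB Require Import structures.
From mathcomp Require Import all_boot all_order all_algebra.
From mathcomp Require Import finmap.
From mathcomp.multinomials Require Import monalg.

Set Implicit Arguments.
Unset Strict Implicit.
Unset Printing Implicit Defensive.

Import GRing.Theory.
Local Open Scope ring_scope.

(* Letters: [true] stands for pi, [false] stands for y.  Words are [seq bool]. *)
(* The free noncommutative Q-algebra Q<pi,y> is the monoid algebra of the
   free monoid {fmonom bool} with rational coefficients. *)
Definition QPY := {malg rat[{fmonom bool}]}.

Definition pi_ : QPY := << fmu true >>.
Definition y_ : QPY := << fmu false >>.
Definition rho : QPY := pi_ - 1.

Definition letter (a : bool) : QPY := if a then pi_ else y_.
Definition word (w : seq bool) : QPY := \prod_(a <- w) letter a.

(* shuffle of two words, by the recursive rules of the paper: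
   1 sh v = v, u sh 1 = u,
   (y u) sh v = u sh (y v) = y (u sh v),
   (pi u) sh (pi v) = pi(u sh pi v) + pi(pi u sh v) - pi(u sh v). *)
Fixpoint shw (u : seq bool) : seq bool -> QPY :=
  match u with
  | [::] => fun v => word v
  | a :: u' =>
      fix shv (v : seq bool) : QPY :=
        match v with
        | [::] => word (a :: u')
        | b :: v' =>
            if ~~ a then y_ * shw u' v
            else if ~~ b then y_ * shv v'
            else pi_ * shw u' v + pi_ * shv v' - pi_ * shw u' v'
        end
  end.

Definition shuffle (f g : QPY) : QPY :=
  \sum_(m <- msupp f) \sum_(n <- msupp g)
     (f@_m * g@_n) *: shw (fmonom_val m) (fmonom_val n).

Definition z (t s : nat) : QPY := rho ^+ t * pi_ ^+ (s - t) * y_.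

Definition admissible (ix : seq (nat * nat)) : bool :=
  match ix with
  | [::] => false
  | p :: ix' => (0 < p.1)%N && (p.1 <= p.2)%N && all (fun q => (q.1 <= q.2)%N) ix'
  end.

Definition zprod (ix : seq (nat * nat)) : QPY := \prod_(q <- ix) z q.1 q.2.

Definition inA0G (u : QPY) : Prop :=
  exists c : seq (rat * seq (nat * nat)),
    all (fun p => admissible p.2) c /\ u = \sum_(p <- c) p.1 *: zprod p.2.

(* Main.v *)
Require Import Defs.
From mathcomp Require Import all_boot all_order all_algebra.
From mathcomp Require Import finmap.
From mathcomp.multinomials Require Import monalg.
Import GRing.Theory.
Local Open Scope ring_scope.

Definition lin (F : {fmonom bool} -> QPY) (g : QPY) : QPY :=
  \sum_(k <- msupp g) g@_k *: F k.

Lemma linEw F {d : {fset {fmonom bool}}} {g} : (msupp g `<=` d)%fset ->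
  lin F g = \sum_(k <- d) g@_k *: F k.
Proof.
move=> le; rewrite /lin (big_fset_incl _ le) //= => x _ /mcoeff_outdom ->.
by rewrite scale0r.
Qed.

Lemma linL F a x y : lin F (a *: x + y) = a *: lin F x + lin F y.
Proof.
set d := (msupp x `|` msupp y)%fset.
have hx : (msupp x `<=` d)%fset by apply: fsubsetUl.
have hy : (msupp y `<=` d)%fset by apply: fsubsetUr.
have hxy : (msupp (a *: x + y) `<=` d)%fset.
  apply: fsubset_trans (msuppD_le _ _) _; apply: fsetUSS => //.
  exact: fsubset_trans (msuppZ_le _ _) _.
rewrite (linEw _ hxy) (linEw _ hx) (linEw _ hy) scaler_sumr -big_split /=.
apply: eq_bigr => k _; by rewrite mcoeffD mcoeffZ scalerDl scalerA.
Qed.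

Lemma monU c (k : {fmonom bool}) : << c *g k >> = c *: (<< k >> : QPY).
Proof.
apply/malgP => k'; rewrite mcoeffZ !mcoeffU.
by case: (k == k'); rewrite ?mulr1 ?mulr0.
Qed.

Lemma linU F k : lin F << k >> = F k.
Proof. by rewrite /lin msuppU1 big_seq_fset1 mcoeffU1 eqxx scale1r. Qed.

Lemma lin_gen (h : QPY -> QPY) :
  (forall a x y, h (a *: x + y) = a *: h x + h y) ->
  forall x, h x = lin (fun m => h << m >>) x.
Proof.
move=> hL.
have h0 : h 0 = 0.
  have := hL 1 0 0; rewrite !scale1r addr0 => E.
  by apply: (@addrI _ (h 0)); rewrite addr0 -E.
move=> x; rewrite {1}(monalgE x) /lin.
elim: (msupp x : seq _) => [|k s IH]; first by rewrite !big_nil.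
by rewrite !big_cons monU hL IH.
Qed.
Notation Sh := shuffle.

Lemma shE f g : Sh f g = lin (fun m => lin (fun n => shw (fmonom_val m) (fmonom_val n)) g) f.
Proof.
rewrite /shuffle /lin; apply: eq_bigr => m _; rewrite scaler_sumr.
by apply: eq_bigr => n _; rewrite scalerA.
Qed.

Lemma shL1 a x y g : Sh (a *: x + y) g = a *: Sh x g + Sh y g.
Proof. by rewrite !shE linL. Qed.

Lemma shL2 f a x y : Sh f (a *: x + y) = a *: Sh f x + Sh f y.
Proof.
rewrite !shE.
have linF (F G : {fmonom bool} -> QPY) h :
    lin (fun m => a *: F m + G m) h = a *: lin F h + lin G h.
  rewrite /lin scaler_sumr -big_split /=; apply: eq_bigr => m _.
  by rewrite scalerDr !scalerA mulrC.
rewrite -linF; rewrite {1}/lin {1}/lin; apply: eq_bigr => m _; congr (_ *: _); exact: linL.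
Qed.

Lemma shU m n : Sh << m >> << n >> = shw (fmonom_val m) (fmonom_val n).
Proof. by rewrite shE !linU. Qed.

Lemma monM (m n : {fmonom bool}) : << m >> * << n >> = << mmul m n >> :> QPY.
Proof. by rewrite malgM_def fgmulUU mulr1. Qed.

Lemma letterM (a : bool) (m : {fmonom bool}) :
  letter a * << m >> = << FMonom (a :: fmonom_val m) >>.
Proof.
have -> : letter a = << fmu a >> by case: a.
by rewrite monM; congr (<< _ >>); apply: val_inj; rewrite /= fmM fmU.
Qed.

Lemma wordE w : word w = << FMonom w >>.
Proof.
elim: w => [|a w IH].
  rewrite /word big_nil -mpolyC1E; congr (<< _ >>).
  by apply: val_inj; rewrite /= fm1.
by rewrite /word big_cons -/(word w) IH letterM.
Qed.

Lemma bilin_ext (P Q : QPY -> QPY -> QPY) :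
  (forall a x y g, P (a *: x + y) g = a *: P x g + P y g) ->
  (forall f a x y, P f (a *: x + y) = a *: P f x + P f y) ->
  (forall a x y g, Q (a *: x + y) g = a *: Q x g + Q y g) ->
  (forall f a x y, Q f (a *: x + y) = a *: Q f x + Q f y) ->
  (forall m n, P << m >> << n >> = Q << m >> << n >>) ->
  forall f g, P f g = Q f g.
Proof.
move=> P1 P2 Q1 Q2 E f g.
rewrite (lin_gen (P^~ g) (fun a x y => P1 a x y g)).
rewrite (lin_gen (Q^~ g) (fun a x y => Q1 a x y g)) /lin.
apply: eq_bigr => m _; congr (_ *: _).
rewrite (lin_gen (P << m >>) (P2 << m >>)).
rewrite (lin_gen (Q << m >>) (Q2 << m >>)) /lin.
by apply: eq_bigr => n _; rewrite E.
Qed.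

Lemma piM (m : {fmonom bool}) : pi_ * << m >> = << FMonom (true :: fmonom_val m) >>.
Proof. exact: (letterM true). Qed.

Lemma sh_pi_mon m n :
  Sh (pi_ * << m >>) (pi_ * << n >>) =
  pi_ * Sh << m >> (pi_ * << n >>) + pi_ * Sh (pi_ * << m >>) << n >>
  - pi_ * Sh << m >> << n >>.
Proof. by rewrite !piM !shU. Qed.
Opaque shuffle.

Lemma commC (g : QPY) c : g * c%:MP = c *: g.
Proof.
rewrite malgM_def fgmulgU malgZ_def /fgscale; apply: eq_bigr => k _.
by rewrite mulm1 mulrC.
Qed.

Lemma scalerAr' (g : QPY) c x : g * (c *: x) = c *: (g * x).
Proof. by rewrite -!commC mulrA. Qed.

Lemma piL a x y : pi_ * (a *: x + y) = a *: (pi_ * x) + pi_ * y.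
Proof. by rewrite mulrDr scalerAr'. Qed.

Lemma rearr a (X1 X2 X3 Y1 Y2 Y3 : QPY) :
  a *: X1 + Y1 + (a *: X2 + Y2) - (a *: X3 + Y3) =
  a *: (X1 + X2 - X3) + (Y1 + Y2 - Y3).
Proof. by rewrite scalerBr scalerDr opprD (addrACA (a *: X1)) (addrACA (a *: X1 + a *: X2)). Qed.

Lemma Qlin (A B C : QPY -> QPY) :
  (forall a x y, A (a *: x + y) = a *: A x + A y) ->
  (forall a x y, B (a *: x + y) = a *: B x + B y) ->
  (forall a x y, C (a *: x + y) = a *: C x + C y) ->
  forall a x y, pi_ * A (a *: x + y) + pi_ * B (a *: x + y) - pi_ * C (a *: x + y)
   = a *: (pi_ * A x + pi_ * B x - pi_ * C x) + (pi_ * A y + pi_ * B y - pi_ * C y).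
Proof. by move=> hA hB hC a x y; rewrite hA hB hC !piL rearr. Qed.

Lemma sh_pi f g :
  Sh (pi_ * f) (pi_ * g) =
  pi_ * Sh f (pi_ * g) + pi_ * Sh (pi_ * f) g - pi_ * Sh f g.
Proof.
apply: (@bilin_ext (fun f g => Sh (pi_ * f) (pi_ * g))
  (fun f g => pi_ * Sh f (pi_ * g) + pi_ * Sh (pi_ * f) g - pi_ * Sh f g)).
- by move=> a x y g'; rewrite (piL a x y) (shL1 a).
- by move=> f' a x y; rewrite (piL a x y) (shL2 _ a).
- move=> a x y g'.
  apply: (Qlin (fun x => Sh x (pi_ * g')) (fun x => Sh (pi_ * x) g') (fun x => Sh x g')).
  + by move=> b u v; rewrite shL1.
  + by move=> b u v; rewrite (piL b u v) shL1.
  + by move=> b u v; rewrite shL1.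
- move=> f' a x y.
  apply: (Qlin (fun x => Sh f' (pi_ * x)) (fun x => Sh (pi_ * f') x) (fun x => Sh f' x)).
  + by move=> b u v; rewrite (piL b u v) shL2.
  + by move=> b u v; rewrite shL2.
  + by move=> b u v; rewrite shL2.
- exact: sh_pi_mon.
Qed.

Lemma linB (h : QPY -> QPY) :
  (forall a x y, h (a *: x + y) = a *: h x + h y) ->
  forall x y, h (x - y) = h x - h y.
Proof.
move=> hL.
have h0 : h 0 = 0.
  have := hL 1 0 0; rewrite !scale1r addr0 => E.
  by apply: (@addrI _ (h 0)); rewrite addr0 -E.
have hN z : h (- z) = - h z.
  by have := hL (-1) z 0; rewrite addr0 h0 addr0 !scaleN1r.
move=> x y; have := hL 1 x (- y); by rewrite !scale1r hN.
Qed.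

Lemma shB1 x y g : Sh (x - y) g = Sh x g - Sh y g.
Proof. by apply: (linB (Sh^~ g)) => a x' y'; rewrite shL1. Qed.
Lemma shB2 f x y : Sh f (x - y) = Sh f x - Sh f y.
Proof. by apply: (linB (Sh f)) => a x' y'; rewrite shL2. Qed.

Lemma zid (A S1 S2 S3 : QPY) : A - S2 - (S1 - S3) = A - (S1 + S2 - S3).
Proof. by rewrite -!addrA; congr (_ + _); rewrite !opprD !opprK addrCA. Qed.

Lemma rhoM x : rho * x = pi_ * x - x.
Proof. by rewrite /rho mulrBl mul1r. Qed.

Lemma sh_rho a b :
  Sh (rho * a) (rho * b) =
  rho * (Sh a (pi_ * b) + Sh (pi_ * a) b - Sh a b).
Proof.
rewrite (rhoM a) (rhoM b) (shB1 (pi_ * a) a) (shB2 (pi_ * a) (pi_ * b) b).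
rewrite (shB2 a (pi_ * b) b) (sh_pi a b) rhoM.
rewrite (mulrBr pi_ (Sh a (pi_ * b) + Sh (pi_ * a) b)) (mulrDr pi_ (Sh a (pi_ * b))).
exact: zid.
Qed.

Definition Yp (x : QPY) :=
  forall m : {fmonom bool}, m \in msupp x -> ~~ last true (fmonom_val m).

Lemma Y0 : Yp 0.
Proof. by move=> m; rewrite msupp0 in_fset0. Qed.

Lemma YD x y : Yp x -> Yp y -> Yp (x + y).
Proof.
move=> hx hy m /(fsubsetP (msuppD_le x y)); rewrite in_fsetU => /orP [].
  exact: hx.
exact: hy.
Qed.

Lemma YN x : Yp x -> Yp (- x).
Proof. by move=> hx m; rewrite msuppN; apply: hx. Qed.

Lemma YB x y : Yp x -> Yp y -> Yp (x - y).
Proof. by move=> hx hy; apply: YD => //; apply: YN. Qed.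

Lemma YZ a x : Yp x -> Yp (a *: x).
Proof. by move=> hx m /(fsubsetP (msuppZ_le a x)); apply: hx. Qed.

Lemma Ysum (T : eqType) (s : seq T) (F : T -> QPY) :
  (forall i, i \in s -> Yp (F i)) -> Yp (\sum_(i <- s) F i).
Proof.
elim: s => [|i s IH] h; first by rewrite big_nil; exact: Y0.
rewrite big_cons; apply: YD; first by apply: h; rewrite mem_head.
by apply: IH => j js; apply: h; rewrite in_cons js orbT.
Qed.

Lemma last_nonempty (c : bool) (s : seq bool) :
  ~~ last true s -> last c s = last true s.
Proof. by case: s. Qed.

Lemma YM g x : Yp x -> Yp (g * x).
Proof.
move=> hx m /msuppM_le [k1 [k2 [_ k2x ->]]].
rewrite fmM last_cat last_nonempty //; exact: hx.
Qed.

Lemma YU (m : {fmonom bool}) : ~~ last true (fmonom_val m) -> Yp << m >>.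
Proof. by move=> h m'; rewrite msuppU1 in_fset1 => /eqP ->. Qed.

Lemma Yword w : ~~ last true w -> Yp (word w).
Proof. by move=> h; rewrite wordE; apply: YU. Qed.

Lemma Yy : Yp y_.
Proof. by apply: YU; rewrite fmU. Qed.

Definition Pw (u : seq bool) := (u == [::]) || ~~ last true u.

Lemma Pcons a u : Pw (a :: u) -> Pw u.
Proof. by case: u => // c u; rewrite /Pw. Qed.

Lemma Pne u : u != [::] -> Pw u -> ~~ last true u.
Proof. by rewrite /Pw => /negbTE ->. Qed.

Lemma Y_shw u v : Pw u -> Pw v -> (u != [::]) || (v != [::]) -> Yp (shw u v).
Proof.
elim: u v => [|a u IHu] v Pu.
  by move=> Pv /= Hne; apply: Yword; apply: Pne.
elim: v => [|b v IHv] Pv Hne.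
  by apply: Yword; apply: Pne.
have Pu' := Pcons _ _ Pu; have Pv' := Pcons _ _ Pv.
have IHv' := IHv Pv' isT; clear IHv Hne.
case: a Pu Pu' IHu IHv' => Pu Pu' IHu IHv'.
- case: b Pv Pv' IHv' => Pv Pv' IHv'.
  + have une : u != [::] by apply/eqP => eu; move: Pu; rewrite eu.
    apply: YB; first apply: YD.
    * by apply: YM; apply: IHu => //; rewrite orbT.
    * by apply: YM; apply: IHv'.
    * by apply: YM; apply: IHu => //; rewrite une.
  + by apply: YM; apply: IHv'.
- by apply: YM; apply: IHu => //; rewrite orbT.
Qed.

Lemma Y_sh a b : Yp a -> Yp b -> Yp (Sh a b).
Proof.
move=> ha hb; rewrite shE /lin; apply: Ysum => m ma; apply: YZ.
apply: Ysum => n nb; apply: YZ; apply: Y_shw.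
- by rewrite /Pw ha // orbT.
- by rewrite /Pw hb // orbT.
- by move: (ha m ma); case: (fmonom_val m).
Qed.


Lemma piE : pi_ = rho + 1.
Proof. by rewrite /rho subrK. Qed.



Definition Z0 (x : QPY) :=
  exists c : seq (rat * seq (nat * nat)),
    all (fun p => all (fun q => (q.1 <= q.2)%N) p.2) c /\
    x = \sum_(p <- c) p.1 *: zprod p.2.

Lemma zmul (q : nat * nat) (c : seq (rat * seq (nat * nat))) :
  z q.1 q.2 * \sum_(p <- c) p.1 *: zprod p.2 =
  \sum_(p <- map (fun p => (p.1, q :: p.2)) c) p.1 *: zprod p.2.
Proof.
rewrite big_map mulr_sumr; apply: eq_bigr => p _.
by rewrite scalerAr' /zprod big_cons.
Qed.

Lemma Z0_1 : Z0 1.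
Proof. by exists [:: (1, [::])]; rewrite /= big_cons big_nil /zprod big_nil scale1r addr0. Qed.

Lemma Z0_pyx k x : Z0 x -> Z0 (pi_ ^+ k * y_ * x).
Proof.
move=> [c [hc ->]]; exists (map (fun p => (p.1, (0%N, k) :: p.2)) c); split.
  by rewrite all_map; apply: sub_all hc => p /= ->.
have -> : pi_ ^+ k * y_ = z (0%N, k).1 (0%N, k).2 by rewrite /z /= expr0 mul1r subn0.
exact: zmul.
Qed.

Lemma A0_0 : inA0G 0.
Proof. by exists [::]; rewrite big_nil. Qed.

Lemma A0_D u v : inA0G u -> inA0G v -> inA0G (u + v).
Proof.
move=> [c1 [h1 ->]] [c2 [h2 ->]]; exists (c1 ++ c2).
by rewrite all_cat h1 h2 big_cat.
Qed.

Lemma A0_Z a u : inA0G u -> inA0G (a *: u).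
Proof.
move=> [c [h ->]]; exists (map (fun p => (a * p.1, p.2)) c); split.
  by rewrite all_map.
by rewrite big_map scaler_sumr; apply: eq_bigr => p _; rewrite scalerA.
Qed.

Lemma A0_Mn u n : inA0G u -> inA0G (u *+ n).
Proof.
move=> hu; elim: n => [|n IH]; first by rewrite mulr0n; exact: A0_0.
by rewrite mulrS; apply: A0_D.
Qed.

Lemma A0_sum (T : eqType) (s : seq T) (F : T -> QPY) :
  (forall i, i \in s -> inA0G (F i)) -> inA0G (\sum_(i <- s) F i).
Proof.
elim: s => [|i s IH] h; first by rewrite big_nil; exact: A0_0.
rewrite big_cons; apply: A0_D; first by apply: h; rewrite mem_head.
by apply: IH => j js; apply: h; rewrite in_cons js orbT.
Qed.

Lemma A0_zx t x : Z0 x -> inA0G (z t.+1 t.+1 * x).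
Proof.
move=> [c [hc ->]].
exists (map (fun p => (p.1, (t.+1, t.+1) :: p.2)) c); split.
  by rewrite all_map; apply: sub_all hc => p /= ->; rewrite leqnn.
exact: (zmul (t.+1, t.+1)).
Qed.

Lemma A0_rpyx k x : Z0 x -> inA0G (rho * pi_ ^+ k * y_ * x).
Proof.
move=> hx.
have -> : pi_ ^+ k = (rho + 1) ^+ k by rewrite piE.
rewrite exprD1n mulr_sumr !mulr_suml; apply: A0_sum => i _.
rewrite mulrnAr !mulrnAl; apply: A0_Mn.
have e : rho * rho ^+ i * y_ = z i.+1 i.+1 by rewrite /z subnn expr0 mulr1 exprS.
by have := A0_zx i x hx; rewrite -e.
Qed.



Lemma Z0_eq A B : A = B -> Z0 B -> Z0 A.
Proof. by move=> ->. Qed.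
Lemma A0_eq A B : A = B -> inA0G B -> inA0G A.
Proof. by move=> ->. Qed.
Lemma Yp_eq A B : A = B -> Yp B -> Yp A.
Proof. by move=> ->. Qed.

Lemma gen3 (R : ringType) (r a b d e : R) : a * b = d * e -> r * a * b = r * d * e.
Proof. by rewrite -!mulrA => ->. Qed.

Arguments Z0_eq {A B}.
Arguments A0_eq {A B}.
Arguments Yp_eq {A B}.

Lemma genS (R : ringType) (a b c d : R) t :
  a ^+ t.+1 * b * c * d = a * (a ^+ t * b * c * d).
Proof. by rewrite exprS -!mulrA. Qed.

Lemma S_word w : ~~ last true w ->
  forall k, Z0 (pi_ ^+ k * word w) /\ inA0G (rho * pi_ ^+ k * word w).
Proof.
elim: w => [|a w IH] // hw k.
have wE : word (a :: w) = letter a * word w by rewrite /word big_cons.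
case: a hw wE => hw wE.
- have hw' : ~~ last true w by move: hw; case: w {IH wE}.
  have [h1 h2] := IH hw' k.+1.
  have e1 : pi_ ^+ k * word (true :: w) = pi_ ^+ k.+1 * word w.
    rewrite wE; change (letter true) with pi_; rewrite [in LHS]mulrA [in RHS]exprSr; reflexivity.
  have e2 : rho * pi_ ^+ k * word (true :: w) = rho * pi_ ^+ k.+1 * word w.
    exact: gen3.
  by split; [exact: (Z0_eq e1 h1) | exact: (A0_eq e2 h2)].
- have hZ : Z0 (word w).
    case: w IH hw wE => [|c w] IH hw wE; first by rewrite /word big_nil; exact: Z0_1.
    have [h1 _] := IH hw 0%N.
    by apply: (Z0_eq _ h1); rewrite expr0 mul1r.
  have e1 : pi_ ^+ k * word (false :: w) = pi_ ^+ k * y_ * word w.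
    rewrite wE; change (letter false) with y_; rewrite [in LHS]mulrA; reflexivity.
  have e2 : rho * pi_ ^+ k * word (false :: w) = rho * pi_ ^+ k * y_ * word w.
    rewrite wE; change (letter false) with y_; rewrite [in LHS]mulrA; reflexivity.
  split; first by apply: (Z0_eq e1); exact: Z0_pyx.
  by apply: (A0_eq e2); exact: A0_rpyx.
Qed.

Lemma A0_of_Y X : Yp X -> inA0G (rho * X).
Proof.
move=> hX.
have eX : rho * X = \sum_(m <- msupp X) X@_m *: (rho * << m >>).
  rewrite {1}(lin_gen (fun x => x) (fun a x y => erefl) X) /lin mulr_sumr.
  by apply: eq_bigr => m _; rewrite scalerAr'.
apply: (A0_eq eX); apply: A0_sum => m mX; apply: A0_Z.
have [_ h] := S_word (fmonom_val m) (hX m mX) 0%N.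
by apply: (A0_eq _ h); rewrite expr0 mulr1 wordE fmK.
Qed.

Lemma Y_zprodR x r : Yp x -> Yp (x * zprod r).
Proof.
elim: r x => [|q r IH] x hx; first by apply: (Yp_eq _ hx); rewrite /zprod big_nil mulr1.
have e : x * zprod (q :: r) = (x * z q.1 q.2) * zprod r.
  rewrite /zprod big_cons [in LHS]mulrA; reflexivity.
apply: (Yp_eq e); apply: IH.
by apply: YM; rewrite /z; apply: YM; exact: Yy.
Qed.

Lemma Y_of_A0 u : inA0G u -> exists X, Yp X /\ u = rho * X.
Proof.
move=> [c [hc ->]]; elim: c hc => [|p c IH].
  by move=> _; exists 0; split; [exact: Y0 | rewrite big_nil mulr0].
move=> /andP [hp /IH [X [hX eX]]].
case: p hp => a [|[t s] r] // /andP [/andP [t0 ts] hr].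
case: t t0 ts => [|t] // _ ts.
exists (a *: (rho ^+ t * pi_ ^+ (s - t.+1) * y_ * zprod r) + X); split.
  apply: YD => //; apply: YZ; apply: Y_zprodR; apply: YM; exact: Yy.
have ez : zprod ((t.+1, s) :: r) = rho * (rho ^+ t * pi_ ^+ (s - t.+1) * y_ * zprod r).
  rewrite /zprod big_cons -/(zprod r) /z; exact: genS.
rewrite big_cons eX /= ez mulrDr scalerAr'.
done.
Qed.

Theorem proposition9p1 (u v : QPY) :
  inA0G u -> inA0G v -> inA0G (shuffle u v).
Proof.
move=> /Y_of_A0 [A [hA ->]] /Y_of_A0 [B [hB ->]].
rewrite sh_rho; apply: A0_of_Y.
apply: YB; first apply: YD.
- by apply: Y_sh => //; apply: YM.
- by apply: Y_sh => //; apply: YM.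
- exact: Y_sh.
Qed.
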